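(* Let $\mathbbm{k}$ be a field of characteristic $0$, $N \geqslant 2$, and let $f: \mathbb{N} \to \mathbb{Q}$ be any function. Suppose that for every $d \geqslant 0$, the defining ideal $I$ of a general set of $\binom{d+N}{N}$ points in $\mathbb{P}^N_{\mathbbm{k}}$ satisfies $\alpha(I^{(m)})/m \geqslant f(\alpha(I))$ for all $m \in \mathbb{N}$. Then for every $s \geqslant 1$, the defining ideal $I$ of a general set of $s$ points in $\mathbb{P}^N_{\mathbbm{k}}$ satisfies $\alpha(I^{(m)})/m \geqslant f(\alpha(I))$ for all $m \in \mathbb{N}$.
   Context: $\alpha(J)$ is the least degree of a nonzero homogeneous element of a homogeneous ideal $J$. For the ideal $I$ of points with point ideals $\mathfrak{p}_1,\dots,\mathfrak{p}_s$, $I^{(m)} = \bigcap_i \mathfrak{p}_i^m$. A property holds for a general set of $s$ points in $\mathbb{P}^N_{\mathbbm{k}}$ if there is a nonempty Zariski open subset $U$ of the parameter space of $s$ points (e.g. of $\mathbb{A}^{s(N+1)}_{\mathbbm{k}}$, with $\mathbf{a}=(a_{ij})$ giving the points $[a_{i0}:\dots:a_{iN}]$) such that the property holds for every set of points corresponding to a point of $U$. *)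

(* Defs.v *)
From HB Require Import structures.
From mathcomp Require Import all_boot all_order all_algebra.
From mathcomp Require Import mpoly.
From Stdlib Require Import ClassicalEpsilon.
Set Implicit Arguments. Unset Strict Implicit. Unset Printing Implicit Defensive.
Import Order.TTheory GRing.Theory Num.Theory.
Local Open Scope ring_scope.

Section Ideals.
Variable R : comNzRingType.

Definition ideal_gen (G : R -> Prop) : R -> Prop :=
  fun F => exists s : seq (R * R),
    (forall x, x \in s -> G x.2) /\ F = \sum_(x <- s) x.1 * x.2.

Definition prods (G : R -> Prop) (m : nat) : R -> Prop :=
  fun F => exists s : seq R,
    size s = m /\ (forall g, g \in s -> G g) /\ F = \prod_(g <- s) g.

Definition ideal_pow (G : R -> Prop) (m : nat) : R -> Prop :=
  ideal_gen (prods G m).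
End Ideals.

Section Points.
Variables (k : fieldType) (N : nat).
Local Notation S := {mpoly k[N.+1]}.

Definition lin_van (a : 'I_N.+1 -> k) : S -> Prop :=
  fun l => l \is 1.-homog /\ l.@[a] = 0.

Definition point_ideal (a : 'I_N.+1 -> k) : S -> Prop :=
  ideal_gen (lin_van a).

Definition point_ideal_pow (a : 'I_N.+1 -> k) (m : nat) : S -> Prop :=
  ideal_pow (lin_van a) m.

Definition pts_ideal (s : nat) (pts : 'I_s -> 'I_N.+1 -> k) : S -> Prop :=
  fun F => forall i, point_ideal (pts i) F.

(* Symbolic power I^(m) = \bigcap_i p_i^m. *)
Definition symb_pow (s : nat) (pts : 'I_s -> 'I_N.+1 -> k) (m : nat)
  : S -> Prop :=
  fun F => forall i, point_ideal_pow (pts i) m F.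

Definition has_deg (J : S -> Prop) (d : nat) : Prop :=
  exists F, J F /\ F != 0 /\ F \is d.-homog.

Definition has_degb (J : S -> Prop) (d : nat) : bool :=
  if excluded_middle_informative (has_deg J d) then true else false.

(* alpha(J): least degree of a nonzero homogeneous element of J
   (set to 0 if there is none, which never happens for the ideals below). *)
Definition alpha (J : S -> Prop) : nat :=
  match excluded_middle_informative (exists d, has_degb J d) with
  | left h => ex_minn h
  | right _ => 0%N
  end.
End Points.

Section General.
Variables (k : fieldType) (s N : nat).

(* The i-th point of the configuration given by a parameter
   a in A^{s(N+1)}: [a_{i0} : ... : a_{iN}]. *)
Definition pt_of (a : 'I_(s * N.+1) -> k) (i : 'I_s) : 'I_N.+1 -> k :=
  fun j => a (mxvec_index i j).

(* Zariski open subset of A^{s(N+1)}: complement of the zero locus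
   of a set Z of polynomials. *)
Definition in_open (Z : {mpoly k[s * N.+1]} -> Prop)
  (a : 'I_(s * N.+1) -> k) : Prop :=
  exists g, Z g /\ g.@[a] != 0.

Definition general_pts (P : ('I_s -> 'I_N.+1 -> k) -> Prop) : Prop :=
  exists Z : {mpoly k[s * N.+1]} -> Prop,
    (exists a, in_open Z a) /\
    forall a, in_open Z a -> (forall i, exists j, pt_of a i j != 0) -> P (pt_of a).
End General.

Definition waldschmidt_bound (k : fieldType) (N : nat) (f : nat -> rat)
  (s : nat) (pts : 'I_s -> 'I_N.+1 -> k) : Prop :=
  forall m : nat, (0 < m)%N ->
    f (alpha (pts_ideal pts)) <= (alpha (symb_pow pts m))%:R / m%:R.

(* Main.v *)
Require Import Defs.
From HB Require Import structures.
From mathcomp Require Import all_boot all_order all_algebra.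
From mathcomp Require Import mpoly.
From Stdlib Require Import ClassicalEpsilon.
Import Order.TTheory GRing.Theory Num.Theory.
Local Open Scope ring_scope.

Section IdealLemmas.
Variable R : comNzRingType.
Implicit Types G : R -> Prop.

Lemma ig0 G : ideal_gen G 0.
Proof. by exists [::]; split => //; rewrite big_nil. Qed.

Lemma igD G x y : ideal_gen G x -> ideal_gen G y -> ideal_gen G (x + y).
Proof.
move=> [s [Hs ->]] [t [Ht ->]]; exists (s ++ t); split; last by rewrite big_cat.
by move=> z; rewrite mem_cat => /orP[/Hs|/Ht].
Qed.

Lemma igM G c x : ideal_gen G x -> ideal_gen G (c * x).
Proof.
move=> [s [Hs ->]]; exists [seq (c * z.1, z.2) | z <- s]; split.
  by move=> z /mapP[w /Hs ? ->].
by rewrite big_map mulr_sumr; apply: eq_bigr => z _; rewrite mulrA.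
Qed.

Lemma igG G c g : G g -> ideal_gen G (c * g).
Proof.
move=> Gg; exists [:: (c, g)]; split; last by rewrite big_seq1.
by move=> z; rewrite inE => /eqP ->.
Qed.

Lemma igN G x : ideal_gen G x -> ideal_gen G (- x).
Proof. by move=> h; rewrite -mulN1r; apply: igM. Qed.

Lemma igB G x y : ideal_gen G x -> ideal_gen G y -> ideal_gen G (x - y).
Proof. by move=> hx hy; apply: igD => //; apply: igN. Qed.

Lemma ig_sum G I (r : seq I) (F : I -> R) :
  (forall i, ideal_gen G (F i)) -> ideal_gen G (\sum_(i <- r) F i).
Proof.
move=> H; elim: r => [|x r IH]; first by rewrite big_nil; apply: ig0.
by rewrite big_cons; apply: igD.
Qed.

Lemma ig_mul2 G u u' w w' : ideal_gen G (u - u') -> ideal_gen G (w - w') ->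
  ideal_gen G (u * w - u' * w').
Proof.
move=> h1 h2.
have -> : u * w - u' * w' = w * (u - u') + u' * (w - w').
  by rewrite mulrBr mulrBr [w * u]mulrC [w * u']mulrC addrA subrK.
by apply: igD; apply: igM.
Qed.

Lemma ig_prod2 G I (r : seq I) (F1 F2 : I -> R) :
  (forall i, ideal_gen G (F1 i - F2 i)) ->
  ideal_gen G (\prod_(i <- r) F1 i - \prod_(i <- r) F2 i).
Proof.
move=> H; apply: (big_ind2 (fun a b => ideal_gen G (a - b))) => //.
  by rewrite subrr; apply: ig0.
by move=> *; apply: ig_mul2.
Qed.

Lemma ig_exp2 G u w e : ideal_gen G (u - w) -> ideal_gen G (u ^+ e - w ^+ e).
Proof.
move=> h; elim: e => [|e IH]; first by rewrite !expr0 subrr; apply: ig0.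
by rewrite !exprS; apply: ig_mul2.
Qed.

End IdealLemmas.

Lemma ig_eval (k : fieldType) n (G : {mpoly k[n]} -> Prop) v F :
  (forall g, G g -> g.@[v] = 0) -> ideal_gen G F -> F.@[v] = 0.
Proof.
move=> HG [s [Hs ->]]; rewrite rmorph_sum big_seq big1 // => z zs.
by rewrite rmorphM /= (HG z.2) ?mulr0 //; apply: Hs.
Qed.

Lemma point_ideal_eval (k : fieldType) N (a : 'I_N.+1 -> k) F :
  point_ideal a F -> F.@[a] = 0.
Proof. by apply: ig_eval => g [_ ->]. Qed.

Lemma lin_van_form (k : fieldType) N (a : 'I_N.+1 -> k) i j :
  lin_van a (a j *: 'X_i - a i *: 'X_j).
Proof.
split.
  by apply: rpredB; apply: rpredZ; rewrite dhomogX /= mdeg1.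
by rewrite mevalB !mevalZ !mevalXU mulrC subrr.
Qed.

Lemma point_ideal_of_vanish (k : fieldType) N (a : 'I_N.+1 -> k) j D
    (F : {mpoly k[N.+1]}) :
  a j != 0 -> F \is D.-homog -> F.@[a] = 0 -> point_ideal a F.
Proof.
move=> aj0 hF Fa.
set J := point_ideal a.
have Hi i : J ('X_i * (a j)%:MP - (a i)%:MP * 'X_j).
  rewrite -[_ - _]mul1r; apply: igG.
  by rewrite mulrC !mul_mpolyC; apply: lin_van_form.
have Hm m : J ('X_[m] * (a j ^+ mdeg m)%:MP -
               (\prod_(i < N.+1) (a i ^+ m i))%:MP * 'X_j ^+ mdeg m).
  have := @ig_prod2 _ (lin_van a) _ (index_enum 'I_N.+1) _ _
     (fun i => @ig_exp2 _ _ _ _ (m i) (Hi i)).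
  congr J; congr (_ - _).
    rewrite (eq_bigr (fun i => 'X_i ^+ m i * ((a j)%:MP ^+ m i))); last first.
      by move=> i _; rewrite exprMn.
    rewrite big_split /= -mpolyXE_id prodrXr -rmorphXn /= mdegE.
    done.
  rewrite (eq_bigr (fun i => (a i ^+ m i)%:MP * ('X_j ^+ m i))); last first.
    by move=> i _; rewrite exprMn rmorphXn.
  by rewrite big_split /= prodrXr -rmorph_prod mdegE.
have HF : J ((a j ^+ D)%:MP * F - 0).
  have -> : (a j ^+ D)%:MP * F =
      \sum_(m <- msupp F) (F@_m)%:MP * ('X_[m] * (a j ^+ mdeg m)%:MP).
    rewrite {1}[F]mpolyE mulr_sumr big_seq [RHS]big_seq; apply: eq_bigr => m hm.
    by rewrite (dhomog_mf hF hm) -mul_mpolyC mulrCA [(_ * (_ ^+ D)%:MP)]mulrC.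
  have E0 : \sum_(m <- msupp F) (F@_m)%:MP *
        ((\prod_(i < N.+1) (a i ^+ m i))%:MP * 'X_j ^+ mdeg m) = 0.
    rewrite big_seq.
    rewrite (eq_bigr (fun m => (F@_m * \prod_(i < N.+1) a i ^+ m i)%:MP * 'X_j ^+ D)); last first.
      by move=> m hm; rewrite (dhomog_mf hF hm) mulrA -mpolyCM.
    by rewrite -mulr_suml -rmorph_sum -big_seq -mevalE Fa mul0r.
  rewrite -[X in _ - X]E0.
  rewrite -sumrB; apply: ig_sum => m.
  by rewrite -mulrBr; apply: igM; apply: Hm.
rewrite subr0 in HF.
have := @igM _ _ (a j ^- D)%:MP _ HF.
rewrite mulrA -rmorphM /= mulVf ?expf_neq0 // mpolyC1 mul1r.
done.
Qed.

Lemma widen_lift n (i : 'I_n) : widen_ord (leqnSn n) i = lift ord_max i.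
Proof. by apply: val_inj => /=; rewrite /bump leqNgt ltn_ord. Qed.

Lemma mnm_split n (m m0 : 'X_{1..n.+1}) :
  (forall i : 'I_n, m (widen_ord (leqnSn n) i) = m0 (widen_ord (leqnSn n) i)) ->
  m ord_max = m0 ord_max -> m = m0.
Proof.
move=> h1 h2; apply/mnmP => i; case: (unliftP ord_max i) => [j ->|->] //.
by rewrite -widen_lift h1.
Qed.

Section Nonroot.
Variable k : fieldType.

Lemma meval_muni n (p : {mpoly k[n.+1]}) (v : 'I_n.+1 -> k) :
  p.@[v] = (map_poly (meval (fun i => v (widen_ord (leqnSn n) i))) (muni p)).[v ord_max].
Proof.
rewrite muniE mevalE rmorph_sum horner_sum; apply: eq_bigr => m _.
rewrite -mul_polyC rmorphM /= map_polyC map_polyXn hornerM hornerC hornerXn /= linearZ /= mevalX.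
rewrite big_ord_recr /= mulrA; congr (_ * _ * _).
by apply: eq_bigr => i _; rewrite mnmE.
Qed.

Lemma muni_neq0 n (p : {mpoly k[n.+1]}) : p != 0 -> muni p != 0.
Proof.
move=> pn0; have [m0 hm0] : exists m0, m0 \in msupp p.
  case E: (msupp p) => [|x s]; last by exists x; rewrite inE eqxx.
  by move: pn0; rewrite (msuppnil0 E) eqxx.
apply/eqP => H.
have : ((muni p)`_(m0 ord_max))@_[multinom m0 (widen_ord (leqnSn n) i) | i < n] = p@_m0.
  rewrite muniE coef_sum raddf_sum /= (bigD1_seq m0) ?msupp_uniq //=.
  rewrite coefZ coefXn eqxx mulr1 mcoeffZ mcoeffX eqxx mulr1 big1 ?addr0 //.
  move=> m hm; rewrite coefZ coefXn.
  case: eqP => [He|]; last by rewrite mulr0 mcoeff0.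
  rewrite mulr1 mcoeffZ mcoeffX; case: eqP => [Hm|]; last by rewrite mulr0.
  exfalso; move/eqP: hm; apply; apply: mnm_split => // i.
  by move/mnmP: Hm => /(_ i); rewrite !mnmE.
rewrite H coef0 mcoeff0 => /esym/eqP; rewrite mcoeff_eq0 hm0.
done.
Qed.

Hypothesis hchar : [pchar k] =i pred0.

Lemma natr_inj_k (i j : nat) : (i%:R : k) = j%:R -> i = j.
Proof.
have P := (pcharf0P k).1 hchar.
wlog le : i j / (i <= j)%N.
  move=> W E; case: (leqP i j) => h; first exact: W.
  by symmetry; apply: W => //; apply: ltnW.
move=> E; apply/eqP; rewrite eqn_leq le /=.
have : ((j - i)%:R : k) == 0 by rewrite natrB // E subrr.
by rewrite P subn_eq0.
Qed.

Lemma poly_nonroot (r : {poly k}) : r != 0 -> exists x, ~~ root r x.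
Proof.
move=> rn0.
set rs := [seq (i%:R : k) | i <- iota 0 (size r)].
have urs : uniq rs.
  by rewrite map_inj_uniq ?iota_uniq // => i j; apply: natr_inj_k.
case: (boolP (all (root r) rs)) => [H|].
  by have := max_poly_roots rn0 H urs; rewrite size_map size_iota ltnn.
by case/allPn => x _ hx; exists x.
Qed.

Lemma mpoly_nonroot n (p : {mpoly k[n]}) : p != 0 -> exists v, p.@[v] != 0.
Proof.
elim: n p => [|n IH] p pn0.
  have Hp : p = (p@_0%MM)%:MP.
    apply/mpolyP => m; rewrite mcoeffC.
    have -> : m = 0%MM by apply/mnmP => -[].
    by rewrite eqxx mulr1.
  exists (fun _ => 0); rewrite Hp mevalC.
  by apply: contra pn0 => /eqP h; rewrite Hp h.
have qn0 := @muni_neq0 _ p pn0.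
have cn0 : lead_coef (muni p) != 0 by rewrite lead_coef_eq0.
have [v' hv'] := IH _ cn0.
set r := map_poly (meval v') (muni p).
have rn0 : r != 0.
  apply/eqP => /(congr1 (fun q : {poly k} => q`_(size (muni p)).-1)).
  rewrite coef_map coef0 /= => /eqP; apply/negP; exact: hv'.
have [x hx] := @poly_nonroot r rn0.
pose v (i : 'I_n.+1) := if unlift ord_max i is Some j then v' j else x.
exists v; rewrite meval_muni.
have -> : map_poly (meval (fun i => v (widen_ord (leqnSn n) i))) (muni p) = r.
  apply: eq_map_poly => q; apply: meval_eq => i.
  by rewrite /v widen_lift liftK.
by rewrite /v unlift_none.
Qed.

End Nonroot.

Section Alpha.
Variables (k : fieldType) (N : nat).
Local Notation S := {mpoly k[N.+1]}.
Implicit Types J : S -> Prop.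

Lemma has_degbP J d : has_degb J d <-> has_deg J d.
Proof. by rewrite /has_degb; case: excluded_middle_informative. Qed.

Lemma alpha_le J d : has_deg J d -> (alpha J <= d)%N.
Proof.
move=> h; rewrite /alpha; case: excluded_middle_informative => [ex|nex].
  by case: ex_minnP => m _ H; apply: H; apply/has_degbP.
by exfalso; apply: nex; exists d; apply/has_degbP.
Qed.

Lemma alpha_has J d : has_deg J d -> has_deg J (alpha J).
Proof.
move=> h; rewrite /alpha; case: excluded_middle_informative => [ex|nex].
  by case: ex_minnP => m Hm _; apply/has_degbP.
by exfalso; apply: nex; exists d; apply/has_degbP.
Qed.

Lemma alpha_mono J J' d : (forall F, J F -> J' F) -> has_deg J d ->
  (alpha J' <= alpha J)%N.
Proof.
move=> sub hd; apply: alpha_le.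
have [F [JF [Fn0 hF]]] := alpha_has _ _ hd.
by exists F; split => //; apply: sub.
Qed.

Lemma alpha_eq J d : has_deg J d -> (forall e, has_deg J e -> (d <= e)%N) ->
  alpha J = d.
Proof.
move=> hd H; apply/eqP; rewrite eqn_leq alpha_le //=.
by apply: H; apply: alpha_has _ _ hd.
Qed.

End Alpha.

Lemma homog_prod (k : fieldType) n (I : Type) (r : seq I) (F : I -> {mpoly k[n]}) :
  (forall i, exists d, F i \is d.-homog) ->
  exists d, \prod_(i <- r) F i \is d.-homog.
Proof.
move=> H; elim: r => [|x r [d IH]]; first by exists 0%N; rewrite big_nil dhomog1.
have [e he] := H x; exists (e + d)%N; rewrite big_cons.
exact: dhomogM.
Qed.

Lemma prod_nseq_exp (R : comNzRingType) (l : R) m :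
  \prod_(g <- nseq m l) g = l ^+ m.
Proof.
by elim: m => [|m IH]; rewrite ?big_nil ?expr0 //= big_cons IH exprS.
Qed.

Section Config.
Variables (k : fieldType) (N : nat).
Hypothesis N1 : (1 <= N)%N.

Lemma exists_lin (a : 'I_N.+1 -> k) : (exists j, a j != 0) ->
  exists l, lin_van a l /\ l != 0 /\ l \is 1.-homog.
Proof.
move=> [j aj].
pose i : 'I_N.+1 := if j == ord0 then ord_max else ord0.
have ij : i != j.
  rewrite /i; case: (j =P ord0) => [E|/eqP E]; last by rewrite eq_sym.
  rewrite E; apply/eqP => /(congr1 val) /= /eqP.
  by move=> /eqP N0; move: N1; rewrite N0.
exists (a j *: 'X_i - a i *: 'X_j); split; first exact: (@lin_van_form _ _ a i j).
split; last by case: (@lin_van_form _ _ a i j).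
apply/eqP => /(congr1 (mcoeff U_(i))).
rewrite mcoeffB !mcoeffZ !mcoeffXU eqxx eq_sym (negbTE ij) mulr0 mulr1 subr0.
by rewrite mcoeff0; apply/eqP.
Qed.

Lemma symb_has_deg s (pts : 'I_s -> 'I_N.+1 -> k) m :
  (forall i, exists j, pts i j != 0) -> exists d, has_deg (symb_pow pts m) d.
Proof.
move=> H.
have [L HL] : exists L : 'I_s -> {mpoly k[N.+1]},
    forall i, lin_van (pts i) (L i) /\ L i != 0 /\ L i \is 1.-homog.
  apply: (@fin_all_exists _ (fun _ => {mpoly k[N.+1]}) (fun i l => lin_van (pts i) l /\ l != 0 /\ l \is 1.-homog)) => i.
  by apply: exists_lin.
have [d hd] : exists d, \prod_(i < s) L i ^+ m \is d.-homog.
  apply: homog_prod => i; exists (1 * m)%N; apply: dhomogMn.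
  by case: (HL i) => _ [].
exists d; exists (\prod_(i < s) L i ^+ m); split; last split => //.
  move=> i0; rewrite (bigD1 i0) //= mulrC; apply: igG.
  exists (nseq m (L i0)); split; first by rewrite size_nseq.
  split; last by rewrite prod_nseq_exp.
  by move=> g /nseqP [-> _]; case: (HL i0).
by apply/prodf_neq0 => i _; apply: expf_neq0; case: (HL i) => _ [].
Qed.

End Config.

Import VectorInternalTheory.

Section Vec.
Variables (k : fieldType) (N d : nat).
Local Notation V := (dhomog N.+1 k d).

Definition bas (j : 'I_(dim V)) : {mpoly k[N.+1]} :=
  mpoly_of_dhomog (@r2v _ V (delta_mx 0 j)).

Definition Ev {r : nat} (q : 'I_r -> 'I_N.+1 -> k) : 'M[k]_(r, dim V) :=
  \matrix_(i, j) (bas j).@[q i].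

Lemma r2v_expand (x : 'rV_(dim V)) :
  mpoly_of_dhomog (@r2v _ V x) = \sum_j x 0 j *: bas j.
Proof.
rewrite {1}[x]row_sum_delta !linear_sum /=; apply: eq_bigr => j _.
by rewrite !linearZ.
Qed.

Lemma Ev_mul r (q : 'I_r -> 'I_N.+1 -> k) (x : 'rV_(dim V)) i :
  (Ev q *m x^T) i 0 = (mpoly_of_dhomog (@r2v _ V x)).@[q i].
Proof.
rewrite mxE r2v_expand rmorph_sum; apply: eq_bigr => j _.
by rewrite !mxE /= mevalZ mulrC.
Qed.

Lemma homog_r2v F (hF : F \is d.-homog) :
  F = mpoly_of_dhomog (@r2v _ V (v2r (DHomog hF))).
Proof. by rewrite v2rK. Qed.

Lemma r2v_eq0 x : mpoly_of_dhomog (@r2v _ V x) = 0 -> x = 0.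
Proof.
move=> h; have : @r2v _ V x = 0.
  by apply: val_inj; rewrite /= h.
by move/(congr1 v2r); rewrite r2vK linear0.
Qed.

Lemma ker_row m (A : 'M[k]_(m, dim V)) : (\rank A < dim V)%N ->
  exists u : 'rV_(dim V), u != 0 /\ A *m u^T = 0.
Proof.
move=> lt; set K := kermx A^T.
have Kn0 : K != 0.
  by rewrite -mxrank_eq0 mxrank_ker mxrank_tr -lt0n subn_gt0.
have [i Ki] : exists i, row i K != 0.
  case: (pickP (fun i => row i K != 0)) => [i hi|H]; first by exists i.
  exfalso; move/eqP: Kn0; apply; apply/row_matrixP => i; rewrite row0.
  by apply/eqP; have := H i => /= /negbFE.
exists (row i K); split => //.
by apply: trmx_inj; rewrite trmx_mul trmxK trmx0 -row_mul mulmx_ker row0.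
Qed.

Lemma exists_vanishing s (pts : 'I_s -> 'I_N.+1 -> k) : (s < dim V)%N ->
  exists F : {mpoly k[N.+1]}, F != 0 /\ F \is d.-homog /\ forall i, F.@[pts i] = 0.
Proof.
move=> lt.
have [u [un0 hu]] := @ker_row _ (Ev pts) (leq_ltn_trans (rank_leq_row (Ev pts)) lt).
exists (mpoly_of_dhomog (@r2v _ V u)); split; [|split].
- by apply: contra un0 => /eqP /r2v_eq0 ->.
- exact: dhomog_is_dhomog.
- by move=> j; rewrite -Ev_mul hu mxE.
Qed.

Hypothesis hchar : [pchar k] =i pred0.

Lemma exists_indep r : (r <= dim V)%N ->
  exists q : 'I_r -> 'I_N.+1 -> k, \rank (Ev q) = r.
Proof.
elim: r => [|r IH] hr.
  exists (fun _ _ => 0); apply/eqP; rewrite -leqn0; exact: rank_leq_row.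
have [q hq] := IH (ltnW hr).
have [u [un0 hu]] : exists u : 'rV_(dim V), u != 0 /\ Ev q *m u^T = 0.
  by apply: ker_row; rewrite hq.
set F := mpoly_of_dhomog (@r2v _ V u).
have Fn0 : F != 0 by apply: contra un0 => /eqP /r2v_eq0 ->.
have [p hp] := @mpoly_nonroot _ hchar _ _ Fn0.
pose q' (i : 'I_r.+1) := if unlift ord0 i is Some j then q j else p.
exists q'.
have sub1 : (Ev q <= Ev q')%MS.
  apply/row_subP => i.
  have -> : row i (Ev q) = row (lift ord0 i) (Ev q').
    by apply/rowP => j; rewrite !mxE /q' liftK.
  exact: row_sub.
have sub2 : (row ord0 (Ev q') <= Ev q')%MS by apply: row_sub.
have nsub : ~~ (row ord0 (Ev q') <= Ev q)%MS.
  apply/negP => /submxP [w hw].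
  have : (row ord0 (Ev q') *m u^T) 0 0 = F.@[p].
    by rewrite -row_mul mxE Ev_mul /q' unlift_none.
  by rewrite hw -mulmxA hu mulmx0 mxE => /esym /eqP; rewrite (negbTE hp).
have lt1 : (\rank (Ev q) < \rank (Ev q + row ord0 (Ev q'))%MS)%N.
  case: (mxrank_leqif_sup (addsmxSl (Ev q) (row ord0 (Ev q')))) => le eqiff.
  rewrite ltn_neqAle le andbT eqiff.
  by apply: contra nsub => H; apply: submx_trans H; apply: addsmxSr.
have le2 : (\rank (Ev q + row ord0 (Ev q'))%MS <= \rank (Ev q'))%N.
  by apply: mxrankS; rewrite addsmx_sub sub1 sub2.
apply/eqP; rewrite eqn_leq rank_leq_row /=.
have := leq_trans lt1 le2; by rewrite hq.
Qed.

Lemma exists_gen_config : exists q : 'I_(dim V) -> 'I_N.+1 -> k, \det (Ev q) != 0.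
Proof.
have [q hq] := @exists_indep _ (leqnn _); exists q.
have : Ev q \in unitmx by rewrite -row_free_unit /row_free hq.
by rewrite unitmxE unitfE.
Qed.

End Vec.
Arguments Ev {k N d r} q.
Arguments bas {k N d} j.
Arguments homog_r2v {k N d F} hF.

Lemma gen_no_form (k : fieldType) N d (q : 'I_(dim (dhomog N.+1 k d)) -> 'I_N.+1 -> k)
    (F : {mpoly k[N.+1]}) :
  \det (Ev q) != 0 -> F \is d.-homog -> (forall i, F.@[q i] = 0) -> F = 0.
Proof.
move=> hdet hF hv.
set x := v2r (DHomog hF).
have hx : Ev q *m x^T = 0.
  apply/matrixP => i j; rewrite ord1 Ev_mul -(homog_r2v hF) hv mxE.
  done.
have U : Ev q \in unitmx by rewrite unitmxE unitfE.
have : x^T = 0 by rewrite -(mulKmx U x^T) hx mulmx0.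
move/(congr1 trmx); rewrite trmxK trmx0 => x0.
rewrite (homog_r2v hF) -/x x0.
have -> : @r2v _ (dhomog N.+1 k d) 0 = 0 by exact: linear0.
by [].

Qed.

Lemma C_ge N d : (1 <= N)%N -> (d < 'C(d + N, N))%N.
Proof.
case: N => [//|N] _; elim: d => [|d IH]; first by rewrite add0n bin_gt0.
rewrite addSn binS (leq_trans _ (leq_add IH (leqnn _))) //.
by rewrite -addn1 leq_add2l bin_gt0 addnS ltnW // ltnS leq_addl.
Qed.

Lemma choose_d N s : (1 <= N)%N -> (1 <= s)%N ->
  exists d, ('C(d + N, N) <= s < 'C(d.+1 + N, N))%N.
Proof.
move=> N1 s1.
have H j : (exists d, ('C(d + N, N) <= s < 'C(d.+1 + N, N))%N) \/ ('C(j + N, N) <= s)%N.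
  elim: j => [|j [IH|IH]]; [by right; rewrite add0n binn | by left | ].
  case: (ltnP s 'C(j.+1 + N, N)) => h; last by right.
  by left; exists j; rewrite IH h.
case: (H s) => // h; exfalso.
by have := leq_trans (@C_ge N s N1) h; rewrite ltnn.
Qed.

Lemma ig_mono (R : comNzRingType) (G G' : R -> Prop) F :
  (forall g, G g -> G' g) -> ideal_gen G F -> ideal_gen G' F.
Proof.
move=> H [s [Hs ->]]; exists s; split => // x /Hs; exact: H.
Qed.

Lemma prods_mono (R : comNzRingType) (G G' : R -> Prop) m F :
  (forall g, G g -> G' g) -> prods G m F -> prods G' m F.
Proof.
move=> H [s [Hs [Hs' ->]]]; exists s; split => //; split => // x /Hs'; exact: H.
Qed.

Lemma lin_van_ext (k : fieldType) N (a b : 'I_N.+1 -> k) l :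
  a =1 b -> lin_van a l -> lin_van b l.
Proof. by move=> ab [h e]; split => //; rewrite -(meval_eq _ ab). Qed.

Lemma point_ideal_ext (k : fieldType) N (a b : 'I_N.+1 -> k) F :
  a =1 b -> point_ideal a F -> point_ideal b F.
Proof. by move=> ab; apply: ig_mono => g; apply: lin_van_ext. Qed.

Lemma point_ideal_pow_ext (k : fieldType) N (a b : 'I_N.+1 -> k) m F :
  a =1 b -> point_ideal_pow a m F -> point_ideal_pow b m F.
Proof.
move=> ab; apply: ig_mono => g; apply: prods_mono => l; exact: lin_van_ext.
Qed.

Definition mxvec_unindex {m n : nat} (c : 'I_(m * n)) : 'I_m * 'I_n :=
  enum_val (cast_ord (esym (mxvec_cast m n)) c).

Lemma mxvec_unindexK m n (i : 'I_m) (j : 'I_n) :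
  mxvec_unindex (mxvec_index i j) = (i, j).
Proof. by rewrite /mxvec_unindex /mxvec_index cast_ordK enum_rankK. Qed.


Section Main.
Variables (k : fieldType) (N : nat).
Hypothesis hchar : [pchar k] =i pred0.
Hypothesis N1 : (1 <= N)%N.
Variables (d s : nat).
Local Notation t := (dim (dhomog N.+1 k d)).
Hypothesis ht : (t <= s)%N.
Hypothesis hs : (s < dim (dhomog N.+1 k d.+1))%N.

Definition wi (i : 'I_t) : 'I_s := widen_ord ht i.

Definition phi (c : 'I_(t * N.+1)) : 'I_(s * N.+1) :=
  mxvec_index (wi (mxvec_unindex c).1) (mxvec_unindex c).2.

Lemma phiE i l : phi (mxvec_index i l) = mxvec_index (wi i) l.
Proof. by rewrite /phi mxvec_unindexK. Qed.

Lemma pt_of_phi (a : 'I_(s * N.+1) -> k) i l :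
  pt_of (a \o phi) i l = pt_of a (wi i) l.
Proof. by rewrite /pt_of /= phiE. Qed.

Definition pullback (g : {mpoly k[t * N.+1]}) : {mpoly k[s * N.+1]} :=
  g \mPo [tuple 'X_(phi c) | c < t * N.+1].

Lemma pullbackE g a : (pullback g).@[a] = g.@[a \o phi].
Proof.
rewrite comp_mpoly_meval; apply: meval_eq => c.
by rewrite tnth_mktuple mevalXU.
Qed.

Definition Mdet : 'M[{mpoly k[s * N.+1]}]_t :=
  \matrix_(i, j) (bas j \mPo [tuple 'X_(mxvec_index (wi i) l) | l < N.+1]).

Definition Det := \det Mdet.

Lemma DetE a : Det.@[a] = \det (Ev (d:=d) (fun i => pt_of a (wi i))).
Proof.
rewrite /Det -det_map_mx; congr (determinant _); apply/matrixP => i j.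
rewrite !mxE /= comp_mpoly_meval; apply: meval_eq => l.
by rewrite tnth_mktuple mevalXU.
Qed.

Definition extend (h : 'I_t -> 'I_N.+1 -> k) : 'I_(s * N.+1) -> k :=
  fun c => mxvec (\matrix_(i < s, l < N.+1)
    if (insub (val i) : option 'I_t) is Some i' then h i' l else 0) 0 c.

Lemma extendE h i l : pt_of (extend h) (wi i) l = h i l.
Proof.
rewrite /pt_of /extend mxvecE mxE; case: insubP => [i' _ hi'|]; last by rewrite /= ltn_ord.
by have -> : i' = i by apply: val_inj; rewrite hi'.
Qed.

Lemma G_nonempty (g : {mpoly k[t * N.+1]}) a0 : g.@[a0] != 0 ->
  exists a, (pullback g * Det).@[a] != 0.
Proof.
move=> ga0; apply: (@mpoly_nonroot _ hchar); apply: mulf_neq0.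
  apply/eqP => h; move: ga0; have := pullbackE g (extend (pt_of a0)).
  have -> : g.@[extend (pt_of a0) \o phi] = g.@[a0].
    apply: meval_eq => c; case: (mxvec_indexP c) => i l /=.
    by rewrite phiE; exact: (extendE (pt_of a0) i l).
  by rewrite h meval0 => <-; rewrite eqxx.
have [q hq] := @exists_gen_config k N d hchar.
apply/eqP => h; move: hq; have := DetE (extend q).
rewrite h meval0.
have -> : Ev (d:=d) (fun i => pt_of (extend q) (wi i)) = Ev q.
  by apply/matrixP => i j; rewrite !mxE; apply: meval_eq => l; rewrite extendE.
by move=> <-; rewrite eqxx.
Qed.

Lemma key (a : 'I_(s * N.+1) -> k) (ha : Det.@[a] != 0)
  (nd : forall i, exists j, pt_of a i j != 0) :
  alpha (pts_ideal (pt_of a)) = d.+1 /\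
  alpha (pts_ideal (pt_of (a \o phi))) = d.+1 /\
  forall m, (alpha (symb_pow (pt_of (a \o phi)) m) <= alpha (symb_pow (pt_of a) m))%N.
Proof.
set pts := pt_of a; set pts' := pt_of (a \o phi).
have inc F : pts_ideal pts F -> pts_ideal pts' F.
  move=> H i; apply: (@point_ideal_ext _ _ (pts (wi i)) (pts' i) F _ (H (wi i))) => l.
  by rewrite /pts' pt_of_phi.
have incs m F : symb_pow pts m F -> symb_pow pts' m F.
  move=> H i; apply: (@point_ideal_pow_ext _ _ (pts (wi i)) (pts' i) m F _ (H (wi i))) => l.
  by rewrite /pts' pt_of_phi.
have K1 : has_deg (pts_ideal pts) d.+1.
  have [F [Fn0 [hF Fv]]] := @exists_vanishing k N d.+1 s pts hs.
  exists F; split => //; move=> i.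
  have [j hj] := nd i.
  exact: (@point_ideal_of_vanish _ _ (pts i) j _ F hj hF (Fv i)).
have K2 e : has_deg (pts_ideal pts') e -> (d < e)%N.
  move=> [F [IF [Fn0 hF]]]; case: (leqP e d) => // le; exfalso.
  set G0 := 'X_ord0 ^+ (d - e) * F.
  have hX : ('X_ord0 : {mpoly k[N.+1]}) \is 1.-homog by rewrite dhomogX /= mdeg1.
  have hG : G0 \is d.-homog.
    by have := dhomogM (dhomogMn (d - e) hX) hF; rewrite mul1n subnK.
  have Xn0 : ('X_ord0 : {mpoly k[N.+1]}) != 0.
    apply/eqP => /(congr1 (mcoeff (mnm1 ord0))).
    by rewrite mcoeffXU eqxx mcoeff0 => /eqP; rewrite oner_eq0.
  have G0n0 : G0 != 0 by apply: mulf_neq0 => //; apply: expf_neq0.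
  have hdet : \det (Ev (d:=d) pts') != 0.
    have -> : Ev (d:=d) pts' = Ev (d:=d) (fun i => pt_of a (wi i)).
      by apply/matrixP => i j; rewrite !mxE; apply: meval_eq => l; rewrite /pts' pt_of_phi.
    by rewrite -DetE.
  move/eqP: G0n0; apply; apply: (@gen_no_form _ _ d pts' G0 hdet hG) => i.
  by rewrite /G0 mevalM (@point_ideal_eval _ _ _ _ (IF i)) mulr0.
have A1 : alpha (pts_ideal pts) = d.+1.
  apply: alpha_eq => // e [F [IF HF]]; apply: K2.
  by exists F; split => //; apply: inc.
have A2 : alpha (pts_ideal pts') = d.+1.
  apply: alpha_eq => //.
  by case: K1 => F [IF HF]; exists F; split => //; apply: inc.
split => //; split => // m.
have [e he] := @symb_has_deg k N N1 s pts m nd.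
exact: (@alpha_mono k N _ _ e (incs m) he).
Qed.

End Main.
Arguments wi {k N d s} ht i.
Arguments phi {k N d s} ht c.
Arguments pullback {k N d s} ht g.
Arguments Det {k N d s} ht.
Arguments pullbackE {k N d s} ht g a.
Arguments pt_of_phi {k N d s} ht a i l.
Arguments G_nonempty {k N} hchar {d s} ht {g a0} _.
Arguments key {k N} N1 {d s} ht hs {a} ha nd.

Theorem lemma5p6 (k : fieldType) (N : nat) (f : nat -> rat) :
  [pchar k] =i pred0 ->
  (2 <= N)%N ->
  (forall d : nat,
     general_pts (fun pts => waldschmidt_bound f pts)
       (s := 'C(d + N, N)) (N := N) (k := k)) ->
  forall s : nat, (1 <= s)%N ->
    general_pts (fun pts => waldschmidt_bound f pts) (s := s) (N := N) (k := k).
Proof.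
move=> hchar N2 hyp s s1.
have N1 : (1 <= N)%N by apply: leq_trans N2.
have [d /andP [hd1 hd2]] := @choose_d N s N1 s1.
have eqC e : dim (dhomog N.+1 k e) = 'C(e + N, N).
  change ('C(e + N, e) = 'C(e + N, N)).
  by rewrite -[X in 'C(_, X) = _](addnK N e) bin_sub // leq_addl.
have ht : (dim (dhomog N.+1 k d) <= s)%N by rewrite eqC.
have hs : (s < dim (dhomog N.+1 k d.+1))%N by rewrite eqC.
have hd : general_pts (fun pts => waldschmidt_bound f pts)
    (s := dim (dhomog N.+1 k d)) (N := N) (k := k).
  by rewrite eqC; apply: hyp.
case: hd => Z [[a0 [g [Zg ga0]]] HZ].
exists (fun h => h = pullback ht g * Det ht); split.
  have [a ha] := G_nonempty hchar ht ga0.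
  by exists a; exists (pullback ht g * Det ht).
move=> a [h [-> ha]] nd.
move: ha; rewrite mevalM mulf_eq0 negb_or => /andP [hg hdet].
have hb := HZ (a \o phi ht).
have [e1 [e2 e3]] := key N1 ht hs hdet nd.
have : waldschmidt_bound f (pt_of (a \o phi ht)).
  apply: hb.
    by exists g; split => //; rewrite -pullbackE.
  move=> i; have [j hj] := nd (wi ht i); exists j.
  by rewrite pt_of_phi.
move=> hb' m m0; rewrite e1 -e2.
apply: le_trans (hb' m m0) _.
apply: ler_wpM2r; first by rewrite invr_ge0 ler0n.
by rewrite ler_nat e3.
Qed.
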